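(* Let $p,n\ge1$, let $a_1,\dots,a_n\in\mathbb{C}$ be distinct, let $m_1,\dots,m_n\ge1$ be integers, let $C_0$ and $B_k^{(j)}$ be complex $p\times p$ matrices, let $\|\cdot\|$ be any induced matrix norm, and let $$R(\lambda)=I\lambda-C_0+\sum_{j=1}^n\sum_{k=1}^{m_j}\frac{B_k^{(j)}}{(\lambda-a_j)^k}.$$ If $\lambda_0$ is an eigenvalue of $R(\lambda)$, then $$|\lambda_0|\le\max_{1\le j\le n}\Big\{|a_j|+\cos\Big(\frac{\pi}{m_j+1}\Big),\ \|C_0\|\Big\}+\frac12\left(\sqrt{\sum_{j=1}^n m_j}+\sqrt{\sum_{j=1}^n\sum_{k=1}^{m_j}\|B_k^{(j)}\|^2}\right).$$
   Context: A scalar $\lambda_0\in\mathbb{C}\setminus\{a_1,\dots,a_n\}$ is an eigenvalue of $R(\lambda)$ if there is a nonzero $v\in\mathbb{C}^p$ with $R(\lambda_0)v=0$. *)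

(* Defs.v *)
From mathcomp Require Import all_boot all_order all_algebra complex.
From mathcomp Require Import classical_sets reals trigo.
Set Implicit Arguments. Unset Strict Implicit. Unset Printing Implicit Defensive.
Import Order.TTheory GRing.Theory Num.Theory.
Local Open Scope ring_scope.

Definition is_vec_norm (R : realType) (p : nat) (N : 'cV[R[i]]_p -> R) : Prop :=
  [/\ (forall v, 0 <= N v),
      (forall v, N v = 0 -> v = 0),
      (forall (c : R[i]) v, N (c *: v) = Normc.normc c * N v)
    & (forall u v, N (u + v) <= N u + N v)].

Definition induced_norm (R : realType) (p : nat) (N : 'cV[R[i]]_p -> R)
  (A : 'M[R[i]]_p) : R :=
  sup [set N (A *m v) / N v | v in [set v : 'cV[R[i]]_p | v != 0]]%classic.

(* The rational matrix function
   R(l) = I l - C0 + sum_j sum_{k=1}^{m_j} B_k^(j) / (l - a_j)^k,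
   with B j k (k : 'I_(m j)) standing for B_{k+1}^{(j)}. *)
Definition Rfun (R : realType) (p n : nat) (a : 'I_n -> R[i]) (m : 'I_n -> nat)
  (C0 : 'M[R[i]]_p) (B : forall j : 'I_n, 'I_(m j) -> 'M[R[i]]_p) (l : R[i])
  : 'M[R[i]]_p :=
  l%:M - C0 + \sum_(j < n) \sum_(k < m j) ((l - a j) ^- k.+1) *: B j k.

Definition is_eigenvalue (R : realType) (p n : nat) (a : 'I_n -> R[i])
  (m : 'I_n -> nat) (C0 : 'M[R[i]]_p)
  (B : forall j : 'I_n, 'I_(m j) -> 'M[R[i]]_p) (l0 : R[i]) : Prop :=
  (forall j, l0 != a j) /\
  exists v : 'cV[R[i]]_p, v != 0 /\ Rfun a C0 B l0 *m v = 0.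

(* Main.v *)
Require Import Defs.
From mathcomp Require Import all_boot all_order all_algebra complex.
From mathcomp Require Import classical_sets reals trigo.
From mathcomp Require Import boolp topology normedtype derive.
From mathcomp Require Import ring lra.
Import Order.TTheory GRing.Theory Num.Theory.
Import numFieldNormedType.Exports.
Local Open Scope ring_scope.
Local Open Scope classical_set_scope.
Local Open Scope complex_scope.

Section Ineq.
Variable R : realType.

Lemma amgm (a x y : R) : 0 < a -> x * y <= a / 2 * x ^+ 2 + a^-1 / 2 * y ^+ 2.
Proof.
move=> a0.
have h : 0 <= (a * x - y) ^+ 2 by exact: sqr_ge0.
have e : a / 2 * x ^+ 2 + a^-1 / 2 * y ^+ 2 - x * y = a^-1 / 2 * (a * x - y) ^+ 2.
  by field; rewrite gt_eqF.
rewrite -subr_ge0 e; apply: mulr_ge0 => //.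
by apply: divr_ge0; [rewrite invr_ge0 ltW | ].
Qed.

Lemma leg (m : nat) (y : nat -> R) (u s a kap : R) :
  (0 < m)%N -> 1 <= s -> 0 < a -> a^-1 <= s -> 0 <= kap ->
  ((1 < m)%N -> 1 / 2 <= kap) ->
  u * y 0%N + \sum_(k < m.-1) y k * y k.+1 <=
  a / 2 * u ^+ 2 + (s / 2 + kap) * \sum_(k < m) y k ^+ 2.
Proof.
move=> m0 s1 a0 as1 k0 k12.
have h0 : u * y 0%N <= a / 2 * u ^+ 2 + s / 2 * y 0%N ^+ 2.
  apply: le_trans (@amgm a u (y 0%N) a0) _; rewrite lerD2l; apply: ler_wpM2r; first exact: sqr_ge0.
  by apply: ler_wpM2r => //; rewrite invr_ge0.
case: m m0 k12 => // -[_ _|M _ k12].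
  rewrite /= big_ord0 addr0 big_ord1.
  apply: le_trans h0 _; rewrite lerD2l; apply: ler_wpM2r; first exact: sqr_ge0.
  by rewrite lerDl.
have hk := k12 isT.
set Q := \sum_(k < M.+2) y k ^+ 2.
have hP : \sum_(k < M.+1) y k * y k.+1 <=
   \sum_(k < M.+1) (y k ^+ 2 / 2 + y k.+1 ^+ 2 / 2).
  apply: ler_sum => k _.
  have := @amgm 1 (y k) (y k.+1) (@ltr01 R); rewrite invr1; lra.
rewrite big_split /= in hP.
have e1 : Q = y 0%N ^+ 2 + \sum_(k < M.+1) y k.+1 ^+ 2.
  by rewrite /Q big_ord_recl.
have e2 : Q = \sum_(k < M.+1) y k ^+ 2 + y M.+1 ^+ 2.
  by rewrite /Q big_ord_recr.
rewrite -!mulr_suml in hP.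
set P1 := \sum_(k < M.+1) y k ^+ 2 in e2 hP.
set P2 := \sum_(k < M.+1) y k.+1 ^+ 2 in e1 hP.
have y0 : 0 <= y 0%N ^+ 2 by exact: sqr_ge0.
have yM : 0 <= y M.+1 ^+ 2 by exact: sqr_ge0.
have Q0 : 0 <= Q by apply: sumr_ge0 => k _; exact: sqr_ge0.
have hs : (s - 1) * P2 >= 0.
  by apply: mulr_ge0; [rewrite subr_ge0 | apply: sumr_ge0 => k _; exact: sqr_ge0].
have hq : (kap - 1/2) * Q >= 0 by apply: mulr_ge0 => //; rewrite subr_ge0.
simpl.
nra.
Qed.

Lemma main_ineq (n : nat) (m : 'I_n -> nat) (r c u T : R)
  (alpha d kap : 'I_n -> R) (b : forall j, 'I_(m j) -> R) :
  (0 < n)%N -> (forall j, (0 < m j)%N) -> 0 < u -> (forall j, 0 < d j) ->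
  (forall j, r <= alpha j + d j) -> (forall j, 0 <= kap j) ->
  (forall j, (1 < m j)%N -> 1 / 2 <= kap j) -> c <= T ->
  (forall j, alpha j + kap j <= T) ->
  r * u <= c * u + \sum_j \sum_(k < m j) b j k * (u / d j ^+ k.+1) ->
  r <= T + 2^-1 * (Num.sqrt ((\sum_j m j)%N)%:R
                   + Num.sqrt (\sum_j \sum_(k < m j) b j k ^+ 2)).
Proof.
move=> n0 m0 u0 d0 hrd k0 k12 cT akT hmain.
pose y j (k : nat) := u / d j ^+ k.+1.
set E : R := ((\sum_j m j)%N)%:R.
set s := Num.sqrt E.
set B2 := \sum_j \sum_(k < m j) b j k ^+ 2.
set beta := Num.sqrt B2.
have nE : n%:R <= E.
  rewrite /E ler_nat -{1}[n]card_ord -sum1_card; apply: leq_sum => j _; exact: m0.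
have n0R : 0 < n%:R :> R by rewrite ltr0n.
have E0 : 0 <= E by rewrite /E ler0n.
have s1 : 1 <= s by rewrite /s -sqrtr1 ler_sqrt // (le_trans _ nE) // ler1n.
have s0 : 0 < s by apply: lt_le_trans s1.
pose a := s / n%:R.
have a0 : 0 < a by rewrite divr_gt0.
have as1 : a^-1 <= s.
  rewrite /a invf_div ler_pdivrMr // -expr2 /s sqr_sqrtr //.
pose Y j := \sum_(k < m j) y j k ^+ 2.
have Y0 j : 0 <= Y j by apply: sumr_ge0 => k _; exact: sqr_ge0.
have hj j : r * Y j <= alpha j * Y j + a / 2 * u ^+ 2 + (s / 2 + kap j) * Y j.
  have e1 : r * Y j <= alpha j * Y j + \sum_(k < m j) y j k * (d j * y j k).
    rewrite /Y mulr_sumr mulr_sumr -big_split; apply: ler_sum => k _ /=.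
    have -> : y j k * (d j * y j k) = d j * y j k ^+ 2 by rewrite expr2; ring.
    by rewrite -mulrDl; apply: ler_wpM2r; [exact: sqr_ge0 | exact: hrd].
  apply: le_trans e1 _; rewrite -addrA lerD2l.
  move: (m0 j) (k12 j); rewrite /Y; case: (m j) => // M _ k12j.
  rewrite big_ord_recl /=.
  have ed0 : d j * y j 0%N = u by rewrite /y expr1 mulrC divfK // gt_eqF.
  have edS k : d j * y j k.+1 = y j k.
    by rewrite /y exprS; field; rewrite ?gt_eqF // ?exprn_gt0 // ?mulf_neq0 // ?gt_eqF // ?expf_neq0 // gt_eqF.
  rewrite ed0.
  under eq_bigr do rewrite /bump /= add1n edS.
  have := @leg M.+1 (y j) u s a (kap j) isT s1 a0 as1 (k0 j) k12j.
  rewrite mulrC; under eq_bigr do rewrite mulrC; done.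
pose YA := \sum_j Y j.
have YA0 : 0 <= YA by apply: sumr_ge0 => j _; exact: Y0.
have hsum : r * YA <= s / 2 * u ^+ 2 + (T + s / 2) * YA.
  have -> : s / 2 * u ^+ 2 = \sum_(j < n) (a / 2 * u ^+ 2).
    rewrite sumr_const card_ord -mulr_natl /a; field; rewrite gt_eqF //.
  rewrite /YA mulr_sumr mulr_sumr -big_split; apply: ler_sum => j _ /=.
  apply: le_trans (hj j) _.
  have := akT j; have := Y0 j; nra.
pose X := \sum_j \sum_(k < m j) b j k * y j k * u.
have h1 : r * u ^+ 2 <= c * u ^+ 2 + X.
  have -> : X = (\sum_j \sum_(k < m j) b j k * (u / d j ^+ k.+1)) * u.
    rewrite mulr_suml; apply: eq_bigr => j _; rewrite mulr_suml.
    by apply: eq_bigr => k _.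
  rewrite expr2 !mulrA -mulrDl; apply: ler_wpM2r; [exact: ltW | exact: hmain].
have B20 : 0 <= B2 by apply: sumr_ge0 => j _; apply: sumr_ge0 => k _; exact: sqr_ge0.
have beta0 : 0 <= beta by exact: sqrtr_ge0.
have hb : X <= beta / 2 * (u ^+ 2 + YA).
  have [be0|bpos] := eqVneq beta 0.
    have hB : B2 = 0.
      have : B2 <= 0 by rewrite -sqrtr_eq0 -/beta be0.
      by move=> h; apply/eqP; rewrite eq_le h B20.
    have hb0 j k : b j k = 0.
      move/eqP: hB; rewrite psumr_eq0; last first.
        by move=> i _; apply: sumr_ge0 => l _; exact: sqr_ge0.
      move/allP/(_ j (mem_index_enum _))/implyP/(_ isT).
      rewrite psumr_eq0; last by move=> l _; exact: sqr_ge0.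
      move/allP/(_ k (mem_index_enum _))/implyP/(_ isT).
      by rewrite sqrf_eq0 => /eqP.
    rewrite be0 mul0r mul0r /X big1 // => j _; rewrite big1 // => k _.
    by rewrite hb0 !mul0r.
  have bpos' : 0 < beta by rewrite lt_neqAle eq_sym bpos.
  have -> : beta / 2 * (u ^+ 2 + YA) =
      \sum_j \sum_(k < m j) (beta^-1 / 2 * (b j k * u) ^+ 2 + beta / 2 * y j k ^+ 2).
    have eB : beta ^+ 2 = B2 by rewrite /beta sqr_sqrtr.
    rewrite mulrDr.
    have -> : beta / 2 * u ^+ 2 = beta^-1 / 2 * u ^+ 2 * B2.
      by rewrite -eB; field; rewrite gt_eqF.
    rewrite /B2 /YA /Y mulr_sumr mulr_sumr -big_split; apply: eq_bigr => j _ /=.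
    rewrite mulr_sumr mulr_sumr -big_split; apply: eq_bigr => k _ /=.
    by rewrite exprMn; ring.
  rewrite /X; apply: ler_sum => j _; apply: ler_sum => k _.
  rewrite -mulrA (mulrC (y j k)) mulrA.
  have := @amgm (beta^-1) (b j k * u) (y j k); rewrite invr_gt0 invrK; apply.
  exact: bpos'.
have u2 : 0 < u ^+ 2 by exact: exprn_gt0.
have S0 : 0 < u ^+ 2 + YA by lra.
rewrite -(ler_pM2r S0).
have cu : c * u ^+ 2 <= T * u ^+ 2 by apply: ler_wpM2r => //; exact: sqr_ge0.
nra.
Qed.

End Ineq.

Section VecNorm.
Variables (R : realType) (p : nat) (N : 'cV[R[i]]_p -> R).
Hypothesis hN : is_vec_norm N.

Lemma normc_ge0 (z : R[i]) : 0 <= Normc.normc z.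
Proof. by case: z => a b /=; exact: sqrtr_ge0. Qed.

Lemma normcR (t : R) : Normc.normc (t%:C) = `|t|.
Proof. by rewrite /= expr0n /= addr0 sqrtr_sqr. Qed.

Lemma normc_le (a b : R) : Normc.normc (a +i* b) <= `|a| + `|b|.
Proof.
have -> : (a +i* b) = (a +i* 0) + (0 +i* b) by rewrite -[RHS]/((a + 0) +i* (0 + b)) addr0 add0r.
apply: le_trans (le_normcD _ _) _.
rewrite -normcR lerD //.
by rewrite /= expr0n /= add0r sqrtr_sqr.
Qed.

Lemma N_ge0 v : 0 <= N v. Proof. by case: hN. Qed.

Lemma N0 : N 0 = 0.
Proof.
case: hN => _ _ hZ _.
by rewrite -(scale0r (0 : 'cV[R[i]]_p)) hZ Normc.normc0 mul0r.
Qed.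

Lemma NZ c v : N (c *: v) = Normc.normc c * N v.
Proof. by case: hN. Qed.

Lemma ND u v : N (u + v) <= N u + N v.
Proof. by case: hN. Qed.

Lemma NN v : N (- v) = N v.
Proof.
by rewrite -scaleN1r NZ normcN Normc.normc1 mul1r.
Qed.

Lemma Nsum (I : Type) (r : seq I) (P : pred I) (F : I -> 'cV[R[i]]_p) :
  N (\sum_(i <- r | P i) F i) <= \sum_(i <- r | P i) N (F i).
Proof.
apply: (big_ind2 (fun a b => N a <= b)); first by rewrite N0.
  by move=> x1 x2 y1 y2 h1 h2; apply: le_trans (ND _ _) (lerD h1 h2).
by [].
Qed.

Lemma normc_sum (I : Type) (r : seq I) (P : pred I) (F : I -> R[i]) :
  Normc.normc (\sum_(i <- r | P i) F i) <= \sum_(i <- r | P i) Normc.normc (F i).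
Proof.
apply: (big_ind2 (fun a b => Normc.normc a <= b)); first by rewrite Normc.normc0.
  by move=> x1 x2 y1 y2 h1 h2; apply: le_trans (le_normcD _ _) (lerD h1 h2).
by [].
Qed.

Definition Mn (v : 'cV[R[i]]_p) : R := \sum_i Normc.normc (v i 0).

Lemma Mn_ge0 v : 0 <= Mn v.
Proof. by apply: sumr_ge0 => i _; exact: normc_ge0. Qed.

Lemma coord_le_Mn (v : 'cV[R[i]]_p) (i : 'I_p) : Normc.normc (v i 0) <= Mn v.
Proof.
rewrite /Mn (bigD1 i) //= lerDl; apply: sumr_ge0 => j _; exact: normc_ge0.
Qed.

Lemma N_upper : exists2 K, 0 <= K & forall v, N v <= K * Mn v.
Proof.
exists (\sum_i N (delta_mx i 0)) => [|v]; first by apply: sumr_ge0 => i _; exact: N_ge0.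
have -> : v = \sum_i v i 0 *: delta_mx i 0.
  by rewrite {1}(matrix_sum_delta v); apply: eq_bigr => i _; rewrite big_ord1.
have h1 := @Nsum _ (index_enum 'I_p) xpredT (fun i => v i 0 *: delta_mx i 0).
apply: le_trans h1 _.
rewrite mulr_suml; apply: ler_sum => i _.
rewrite NZ mulrC; apply: ler_wpM2l; first exact: N_ge0.
have -> : (\sum_j v j 0 *: delta_mx j 0) = v.
  by rewrite {2}(matrix_sum_delta v); apply: eq_bigr => j _; rewrite big_ord1.
exact: coord_le_Mn.
Qed.


Definition emb (x : 'rV[R]_(p + p)) : 'cV[R[i]]_p :=
  \col_i ((lsubmx x) 0 i +i* (rsubmx x) 0 i).
Definition unemb (v : 'cV[R[i]]_p) : 'rV[R]_(p + p) :=
  row_mx (\row_i complex.Re (v i 0)) (\row_i complex.Im (v i 0)).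

Lemma embK v : emb (unemb v) = v.
Proof.
apply/matrixP => i j; rewrite /emb /unemb row_mxKl row_mxKr !mxE (ord1 j).
by case: (v i 0).
Qed.

Lemma embB x y : emb (x - y) = emb x - emb y.
Proof. by apply/matrixP => i j; rewrite !mxE. Qed.

Lemma embZ (t : R) x : emb (t *: x) = t%:C *: emb x.
Proof.
apply/matrixP => i j; rewrite !mxE.
by apply/eqP; rewrite eq_complex /= !mul0r subr0 addr0 !eqxx.
Qed.

Lemma emb_eq0 x : emb x = 0 -> x = 0.
Proof.
move=> h; rewrite -[x]hsubmxK.
have -> : lsubmx x = 0.
  apply/matrixP => i j; move/matrixP: h => /(_ j 0); rewrite !mxE (ord1 i).
  by case.
have -> : rsubmx x = 0.
  apply/matrixP => i j; move/matrixP: h => /(_ j 0); rewrite !mxE (ord1 i).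
  by case.
by rewrite row_mx0.
Qed.

Lemma coord_le_norm (x : 'rV[R]_(p + p)) l : `|x 0 l| <= `|x|.
Proof.
have -> : `|x| = mx_norm x by [].
rewrite mx_normrE; apply/bigmax_geP; right => /=.
by exists (0, l).
Qed.

Lemma Mn_emb x : Mn (emb x) <= (`|x| + `|x|) *+ p.
Proof.
rewrite /Mn -[p in _ *+ p]card_ord -sumr_const; apply: ler_sum => i _.
rewrite mxE; apply: le_trans (normc_le _ _) _.
by rewrite !mxE lerD // coord_le_norm.
Qed.

Lemma N_lip v w : `|N v - N w| <= N (v - w).
Proof.
rewrite ler_norml; apply/andP; split.
  rewrite lerBrDl lerBlDr -(NN (v - w)) opprB.
  by have := ND v (w - v); rewrite addrC subrK.
by rewrite lerBlDl; have := ND w (v - w); rewrite addrC subrK.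
Qed.

Lemma Nemb_lip K x y : 0 <= K -> (forall v, N v <= K * Mn v) ->
  `|N (emb x) - N (emb y)| <= K * ((`|x - y| + `|x - y|) *+ p).
Proof.
move=> K0 hK; apply: le_trans (N_lip _ _) _.
rewrite -embB; apply: le_trans (hK _) _.
by apply: ler_wpM2l => //; exact: Mn_emb.
Qed.

Lemma N_lower : (0 < p)%N -> exists2 c, 0 < c & forall v, c * Mn v <= N v.
Proof.
move=> p0.
have [K K0 hK] := N_upper.
pose g x := N (emb x).
pose S := [set x : 'rV[R]_(p + p) | `|x| = 1].
have gc : continuous g.
  move=> x. apply: (@cvgrPdist_lt _ _ _ (nbhs x) (nbhs_filter x) g (g x)).2 => e e0.
  pose L := K * (1 + 1) *+ p + 1.
  have L0 : 0 < L by rewrite ltr_wpDl // mulrn_wge0 // mulr_ge0 // addr_ge0.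
  have hx : (fun y : 'rV[R]_(p + p) => y) @ (nbhs x) --> x by exact: cvg_id.
  have := (@cvgrPdist_lt _ _ _ (nbhs x) _ (fun y => y) x).1 hx (e / L) (divr_gt0 e0 L0).
  move=> /(_ (nbhs_filter x)) H.
  apply: (@filterS _ (nbhs x) (nbhs_filter x) _ _ _ H) => y hy.
  rewrite /g; have hl := Nemb_lip K x y K0 hK; apply: le_lt_trans hl _.
  set d := `|x - y|.
  have d0 : 0 <= d by exact: normr_ge0.
  have -> : K * ((d + d) *+ p) = d * (K * (1 + 1) *+ p).
    by rewrite !mulrnAr; congr (_ *+ _); ring.
  apply: (@le_lt_trans _ _ (d * L)).
    by apply: ler_wpM2l => //; rewrite lerDl.
  by rewrite -ltr_pdivlMr.
have S0 : S !=set0.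
  pose z : 'rV[R]_(p + p) := const_mx 1.
  have z0 : `|z| != 0.
    rewrite normr_eq0; apply/eqP => /matrixP /(_ 0 (lshift p (Ordinal p0))).
    by rewrite !mxE => /eqP; rewrite oner_eq0.
  exists (`|z|^-1 *: z); rewrite /S /= normrZ normrV ?unitfE // normr_id.
  by rewrite mulVf.
have cS : compact S.
  apply: bounded_closed_compact.
    rewrite /= /bounded_near.
    apply: filterS (nbhs_pinfty_ge (num_real (1 : R))) => M hM x /= Sx.
    by rewrite Sx.
  apply: (@preimage_closed _ _ (fun x : 'rV[R]_(p + p) => `|x|) [set y : R | y = 1]).
    by move=> x _; exact: norm_continuous.
  exact: closed_eq.
have [x0 x0S x0min] := compact_EVT_min S0 cS (continuous_subspaceT gc).
have c00 : 0 < g x0.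
  rewrite lt_neqAle N_ge0 andbT; apply/eqP => /esym h.
  case: hN => _ hz _ _; have hx0 := emb_eq0 _ (hz _ h).
  by move: x0S; rewrite inE /S /= hx0 normr0 => /esym/eqP; rewrite oner_eq0.
have key v : g x0 * `|unemb v| <= N v.
  set x := unemb v.
  have [->|xn0] := eqVneq x 0; first by rewrite normr0 mulr0 N_ge0.
  have nx : 0 < `|x| by rewrite normr_gt0.
  have -> : v = `|x|%:C *: emb (`|x|^-1 *: x).
    by rewrite -embZ scalerA divff ?gt_eqF // scale1r embK.
  rewrite NZ normcR normr_id mulrC; apply: ler_wpM2l; first exact: ltW.
  apply: x0min; rewrite inE /S /= normrZ normrV ?unitfE ?gt_eqF // normr_id.
  by rewrite mulVf ?gt_eqF.
have P0 : 0 < (1 + 1 : R) *+ p by rewrite pmulrn_lgt0 // addr_gt0.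
exists (g x0 / ((1 + 1) *+ p)); first by rewrite divr_gt0.
move=> v; apply: le_trans (key v).
rewrite mulrAC ler_pdivrMr // -mulrA.
apply: ler_wpM2l; first exact: ltW.
rewrite -{1}(embK v); apply: le_trans (Mn_emb _) _.
by rewrite mulrnAr mulrDr mulr1.
Qed.

Lemma Mn_mul (A : 'M[R[i]]_p) v :
  Mn (A *m v) <= (\sum_i \sum_j Normc.normc (A i j)) * Mn v.
Proof.
rewrite /Mn mulr_suml; apply: ler_sum => i _; rewrite mxE.
apply: le_trans (normc_sum _ _ _ _) _.
rewrite mulr_suml; apply: ler_sum => j _; rewrite Normc.normcM.
by apply: ler_wpM2l; [exact: normc_ge0 | exact: coord_le_Mn].
Qed.

Lemma N_pos v : v != 0 -> 0 < N v.
Proof.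
move=> v0; rewrite lt_neqAle N_ge0 andbT; apply/eqP => /esym h.
by case: hN => _ hz _ _; move: v0; rewrite (hz _ h) eqxx.
Qed.

Lemma induced_ub (A : 'M[R[i]]_p) v : (0 < p)%N ->
  N (A *m v) <= induced_norm N A * N v.
Proof.
move=> p0.
have [->|v0] := eqVneq v 0; first by rewrite mulmx0 N0 mulr0.
have Nv := N_pos _ v0.
rewrite -ler_pdivrMr //.
apply: ub_le_sup; last by exists v.
have [K K0 hK] := N_upper.
have [c c0 hc] := N_lower p0.
exists (K * (\sum_i \sum_j Normc.normc (A i j)) / c) => _ [w /= w0 <-].
have Nw := N_pos _ w0.
rewrite ler_pdivrMr //.
have h1 : Mn w <= c^-1 * N w by rewrite mulrC ler_pdivlMr // mulrC; exact: hc.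
apply: le_trans (hK _) _.
rewrite -!mulrA; apply: ler_wpM2l => //.
apply: le_trans (Mn_mul _ _) _; apply: ler_wpM2l => //.
by apply: sumr_ge0 => i _; apply: sumr_ge0 => j _; exact: normc_ge0.
Qed.

End VecNorm.
Arguments N_pos {R p N}.
Arguments NZ {R p N}.
Arguments ND {R p N}.
Arguments NN {R p N}.
Arguments Nsum {R p N}.
Arguments induced_ub {R p N}.
Arguments N_ge0 {R p N}.

Section Trig.
Variable R : realType.

Lemma cos_pi3 : cos (pi / 3%:R) = 1 / 2 :> R.
Proof.
set t := pi / 3%:R : R.
have t0 : 0 < t by rewrite divr_gt0 // pi_gt0.
have tlt : t < pi / 2.
  rewrite /t ltr_pM2l ?pi_gt0 // ltf_pV2 ?posrE //; lra.
have c0 : 0 < cos t by apply: cos_gt0_pihalf; rewrite tlt andbT; lra.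
have e : cos (t + t *+ 2) = -1.
  have -> : t + t *+ 2 = pi by rewrite /t; field.
  exact: cospi.
rewrite cosD cos_mulr2n sin_mulr2n in e.
have e2 : sin t ^+ 2 = 1 - cos t ^+ 2 by rewrite sin2cos2.
set c := cos t in c0 e e2 *.
set sn := sin t in e e2.
have h : (c + 1) * (2 * c - 1) ^+ 2 = 0.
  have -> : (c + 1) * (2 * c - 1) ^+ 2 = c * (c ^+ 2 *+ 2 - 1) - sn * (c * sn *+ 2) + 1.
    rewrite (_ : sn * (c * sn *+ 2) = c *+ 2 * sn ^+ 2); last by ring.
    rewrite e2; ring.
  by rewrite e addNr.
move/eqP: h; rewrite mulf_eq0 sqrf_eq0 => /orP[|].
  by rewrite addr_eq0 => /eqP ce; move: c0; rewrite ce; lra.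
by move/eqP => h; lra.
Qed.

Lemma cos_m_ge0 (m : nat) : (0 < m)%N -> 0 <= cos (pi / m.+1%:R) :> R.
Proof.
move=> m0; apply: cos_ge0_pihalf.
have p0 := @pi_gt0 R.
have m1 : 2 <= m.+1%:R :> R by rewrite ler_nat.
have h : pi / m.+1%:R <= pi / 2 :> R.
  apply: ler_wpM2l; first exact: ltW.
  by rewrite lef_pV2 ?posrE //; lra.
have h2 : 0 <= pi / m.+1%:R :> R by rewrite divr_ge0 // ltW.
have h4 : 0 <= pi / 2 :> R by rewrite divr_ge0 // ltW.
by apply/andP; split => //; apply: le_trans h2; rewrite oppr_le0 divr_ge0 // ltW.
Qed.

Lemma cos_m_ge_half (m : nat) : (1 < m)%N -> 1 / 2 <= cos (pi / m.+1%:R) :> R.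
Proof.
move=> m1; rewrite -cos_pi3.
have p0 := @pi_gt0 R.
have m3 : 3 <= m.+1%:R :> R by rewrite ler_nat.
have h : pi / m.+1%:R <= pi / 3%:R :> R.
  apply: ler_wpM2l; first exact: ltW.
  by rewrite lef_pV2 ?posrE //; lra.
have h2 : 0 <= pi / m.+1%:R :> R by rewrite divr_ge0 // ltW.
have h3 : pi / 3%:R <= pi :> R by rewrite ler_pdivrMr ?ler_peMr //; lra.
move: h; rewrite le_eqVlt => /orP[/eqP -> //|hlt].
apply: ltW; rewrite ltr_cos // in_itv /= ?h2 ?h3 /=; first exact: le_trans (ltW hlt) h3.
by rewrite andbT divr_ge0 // ltW.
Qed.

End Trig.

Lemma bigmax_idx_le (R : realType) n (c : R) (F : 'I_n -> R) :
  c <= \big[Num.max/c]_(j < n) F j.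
Proof. by elim/big_rec: _ => // j x _ h; rewrite le_max h orbT. Qed.

Lemma bigmax_F_le (R : realType) n (c : R) (F : 'I_n -> R) j :
  F j <= \big[Num.max/c]_(j < n) F j.
Proof. by rewrite (bigD1 j) //= le_max lexx. Qed.

Lemma normcX (R : realType) (z : R[i]) k :
  Normc.normc (z ^+ k) = Normc.normc z ^+ k.
Proof.
elim: k => [|k ih]; first by rewrite !expr0 Normc.normc1.
by rewrite !exprS Normc.normcM ih.
Qed.

Local Close Scope classical_set_scope.
Local Close Scope complex_scope.

Theorem corollary3p11 (R : realType) (p n : nat) (a : 'I_n -> R[i])
  (m : 'I_n -> nat) (C0 : 'M[R[i]]_p)
  (B : forall j : 'I_n, 'I_(m j) -> 'M[R[i]]_p)
  (N : 'cV[R[i]]_p -> R) (l0 : R[i]) :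
  (0 < p)%N -> (0 < n)%N -> injective a -> (forall j, (0 < m j)%N) ->
  is_vec_norm N ->
  is_eigenvalue a C0 B l0 ->
  Normc.normc l0 <=
    \big[Num.max/induced_norm N C0]_(j < n)
       (Normc.normc (a j) + cos (pi / (m j).+1%:R))
    + 2^-1 * (Num.sqrt ((\sum_(j < n) m j)%N)%:R
              + Num.sqrt (\sum_(j < n) \sum_(k < m j) induced_norm N (B j k) ^+ 2)).
Proof.
move=> p0 n0 ainj m0 hN [hne [v [v0 hv]]].
set S := \sum_(j < n) \sum_(k < m j) (l0 - a j) ^- k.+1 *: B j k.
have e : l0 *: v = C0 *m v - S *m v.
  apply/eqP; rewrite -subr_eq0; apply/eqP; rewrite -hv.
  by rewrite /Rfun mulmxDl mulmxBl mul_scalar_mx opprB addrA addrAC.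
have u0 := N_pos hN v v0.
have hmain : Normc.normc l0 * N v <= induced_norm N C0 * N v +
    \sum_j \sum_(k < m j) induced_norm N (B j k) *
        (N v / Normc.normc (l0 - a j) ^+ k.+1).
  rewrite -(NZ hN) e; apply: le_trans (ND hN _ _) _; rewrite (NN hN).
  apply: lerD; first exact: induced_ub.
  rewrite /S mulmx_suml; apply: le_trans (Nsum hN _ _ _ _) _.
  apply: ler_sum => j _; rewrite mulmx_suml; apply: le_trans (Nsum hN _ _ _ _) _.
  apply: ler_sum => k _; rewrite -scalemxAl scalemxAr.
  apply: le_trans (induced_ub hN _ _ p0) _.
  by rewrite (NZ hN) Normc.normcV normcX [_^-1 * _]mulrC.
apply: (@main_ineq R n m _ (induced_norm N C0) (N v) _ (fun j => Normc.normc (a j)) (fun j => Normc.normc (l0 - a j)) (fun j => cos (pi / (m j).+1%:R))) => //.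
- move=> j; rewrite lt_neqAle normc_ge0 andbT; apply/eqP => /esym /Normc.eq0_normc.
  by move/eqP; rewrite subr_eq0 (negbTE (hne j)).
- move=> j; rewrite -{1}(subrK (a j) l0) addrC; exact: le_normcD.
- move=> j; exact: cos_m_ge0.
- move=> j; exact: cos_m_ge_half.
- exact: bigmax_idx_le.
- move=> j; exact: bigmax_F_le.
Qed.
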